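(* Let $(A_C,\mathcal R_A)$ be an autocatalytic core of a CRN. Then for every species $X\in A_C$ there is a reaction $r^-\to r^+$ in $\mathcal R_A$ such that $X$ is the only species of $A_C$ occurring in $r^-$, i.e. $\{Y\in A_C: r^-_Y>0\}=\{X\}$.
   Context: A chemical reaction network (CRN) consists of a finite species set $\mathcal S$ and a finite set $\mathcal R$ of reactions; each reaction $r$ is written $r^-\to r^+$ with input complex $r^-\in\mathbb Z_{\ge0}^{\mathcal S}$ and output complex $r^+\in\mathbb Z_{\ge0}^{\mathcal S}$. The input and output matrices $\mathbb S^-,\mathbb S^+$ are the $\mathcal S\times\mathcal R$ matrices whose column indexed by $r$ is $r^-$, resp. $r^+$; the stoichiometric matrix is $\mathbb S=\mathbb S^+-\mathbb S^-$. For a matrix $\mathbb A$ with rows indexed by $\mathcal S$ and columns by $\mathcal R$ and subsets $M\subseteq\mathcal S$, $N\subseteq\mathcal R$, $(\mathbb A)_M^N$ is the submatrix with rows in $M$ and columns in $N$. For a vector $\mathbf v$: $\mathbf v\gg\mathbf 0$ means all entries are $>0$; $\mathbf v>\mathbf 0$ (semi-positive) means all entries are $\ge0$ and $\mathbf v\ne\mathbf 0$. A motif is a pair $(\mathcal M,\mathcal R')$ with $\mathcal M\subseteq\mathcal S$, $\mathcal R'\subseteq\mathcal R$. It is exclusively autocatalytic if: (i) there is $\mathbf v\in\mathbb R^{\mathcal R'}$, $\mathbf v\gg\mathbf0$, with $(\mathbb S)_{\mathcal M}^{\mathcal R'}\mathbf v\gg\mathbf 0$; (ii) every row of $(\mathbb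 S^-)_{\mathcal M}^{\mathcal R'}$ is semi-positive; (iii) every column of $(\mathbb S^-)_{\mathcal M}^{\mathcal R'}$ is semi-positive. An autocatalytic core is an exclusively autocatalytic motif $(A_C,\mathcal R_A)$ such that no motif $(\mathcal M',\mathcal R'')\neq(A_C,\mathcal R_A)$ with $\mathcal M'\subseteq A_C$ and $\mathcal R''\subseteq\mathcal R_A$ is exclusively autocatalytic; $A_C$ is called its core set. *)

(* Defs.v *)
From mathcomp Require Import all_boot all_order all_algebra.
Set Implicit Arguments. Unset Strict Implicit. Unset Printing Implicit Defensive.
Import Order.TTheory GRing.Theory Num.Theory.
Local Open Scope ring_scope.

(* A CRN with finite species type S and finite reaction type Rx is given by
   its input and output matrices Sm (= S^-) and Sp (= S^+): Sm X r = r^-_X. *)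

Definition stoich (F : realFieldType) (S Rx : finType)
  (Sm Sp : S -> Rx -> nat) (X : S) (r : Rx) : F :=
  (Sp X r)%:R - (Sm X r)%:R.

Definition excl_autocatalytic (F : realFieldType) (S Rx : finType)
  (Sm Sp : S -> Rx -> nat) (M : {set S}) (N : {set Rx}) : Prop :=
  [/\ M != set0, N != set0,
      (exists v : Rx -> F, (forall r, r \in N -> 0 < v r) /\
         forall X, X \in M -> 0 < \sum_(r in N) stoich F Sm Sp X r * v r),
      (forall X, X \in M -> exists2 r, r \in N & (0 < Sm X r)%N) &
      (forall r, r \in N -> exists2 X, X \in M & (0 < Sm X r)%N)].

Definition autocatalytic_core (F : realFieldType) (S Rx : finType)
  (Sm Sp : S -> Rx -> nat) (A : {set S}) (RA : {set Rx}) : Prop :=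
  excl_autocatalytic F Sm Sp A RA /\
  forall (M : {set S}) (N : {set Rx}), M \subset A -> N \subset RA ->
    excl_autocatalytic F Sm Sp M N -> M = A /\ N = RA.

(* Main.v *)
Require Import Defs.
From mathcomp Require Import all_boot all_order all_algebra.

Theorem mainTheorem3 (F : realFieldType) (S Rx : finType)
  (Sm Sp : S -> Rx -> nat) (A : {set S}) (RA : {set Rx}) :
  autocatalytic_core F Sm Sp A RA ->
  forall X, X \in A ->
    exists2 r, r \in RA & [set Y in A | (0 < Sm Y r)%N] = [set X].
Proof.
move=> [[hA hR hv hrow hcol] hmin] X XA.
case: (boolP [exists r in RA, [forall Y in A, (0 < Sm Y r)%N ==> (Y == X)]]).
  move/exists_inP=> [r rR /forall_inP hr]; exists r => //.
  apply/setP=> Y; rewrite !inE.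
  apply/idP/idP.
    by case/andP=> YA Ypos; exact: (implyP (hr Y YA) Ypos).
  move/eqP=> ->; rewrite XA /=.
  have [Z ZA Zpos] := hcol r rR.
  by have /eqP <- := implyP (hr Z ZA) Zpos.
rewrite negb_exists_in => /forall_inP hno.
have hno' : forall r, r \in RA -> exists2 Y, Y \in A :\ X & (0 < Sm Y r)%N.
  move=> r rR; have := hno r rR; rewrite negb_forall_in => /exists_inP [Y YA].
  rewrite negb_imply => /andP [Ypos YX].
  by exists Y => //; rewrite !inE YX YA.
have : excl_autocatalytic F Sm Sp (A :\ X) RA.
  split => //.
  - case/set0Pn: hR => r0 r0R; have [Y YM _] := hno' r0 r0R.
    by apply/set0Pn; exists Y.
  - case: hv => v [vpos hsum]; exists v; split => // Y; rewrite !inE.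
    by case/andP => _ YA; exact: hsum.
  - by move=> Y; rewrite !inE => /andP [_ YA]; exact: hrow.
move/(hmin _ _ (subsetDl A [set X]) (subxx RA)) => [eqA _].
by move: XA; rewrite -eqA !inE eqxx.
Qed.
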